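(* Assume complete randomization, let $\mathcal Q_{\mathrm U}=\{q:N_q=1\}$ with $N_{\mathrm U}=|\mathcal Q_{\mathrm U}|$, and let $\{\langle g\rangle\}_{g=1}^G$ be a grouping of $\mathcal Q_{\mathrm U}$. Assume Conditions 3 and 6. Let $(w_q)_{q\in\mathcal Q_{\mathrm U}}$ be reals with $\max_q|w_q|\le\overline w$ and $\hat v=\sum_{g=1}^G\sum_{q\in\langle g\rangle}w_q(Y_q-\hat Y_{\langle g\rangle})^2$. There is a universal constant $C>0$ such that for all $t>0$, $$\mathbb P\{|\hat v-\mathbb E\hat v|\ge t\}\le\frac{C\overline w^2(\Delta^4+\Delta^2\zeta^2)N_{\mathrm U}}{t^2}.$$
   Context: Randomization model: $N$ units, $Q$ treatment levels, group sizes $N_1,\dots,N_Q\ge1$ with $\sum_qN_q=N$; unit $i$ has fixed real potential outcomes $Y_i(q)$. Under complete randomization $Z$ is uniform over all vectors in $[Q]^N$ with exactly $N_q$ coordinates equal to $q$; $Y_i=Y_i(Z_i)$. For $q$ with $N_q=1$, $Y_q$ denotes the observed outcome of the unit assigned to $q$. $\overline Y(q)=N^{-1}\sum_iY_i(q)$. Grouping: a fixed (data-independent) partition $\mathcal Q_{\mathrm U}=\bigcup_{g=1}^G\langle g\rangle$ into disjoint groups with $|\langle g\rangle|\ge2$; $\hat Y_{\langle g\rangle}=|\langle g\rangle|^{-1}\sum_{q\in\langle g\rangle}Y_q$, $\overline Y_{\langle g\rangle}=|\langle g\rangle|^{-1}\sum_{q\in\langle g\rangle}\overline Y(q)$. Condition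 3: $\max_qN^{-1}\sum_i\{Y_i(q)-\overline Y(q)\}^4\le\Delta^4$. Condition 6: $\max_g\max_{q\in\langle g\rangle}|\overline Y(q)-\overline Y_{\langle g\rangle}|\le\zeta$. *)

(* Defs.v *)
From HB Require Import structures.
From mathcomp Require Import all_boot all_order all_algebra.
From mathcomp Require Import Rstruct.
Set Implicit Arguments. Unset Strict Implicit. Unset Printing Implicit Defensive.
Import Order.TTheory GRing.Theory Num.Theory.
Local Open Scope ring_scope.

Notation R := Rdefinitions.R.

Section Defs.
Variables (n Q : nat).

Definition assignment := {ffun 'I_n -> 'I_Q}.

Definition CR_support (Nq : 'I_Q -> nat) : {set assignment} :=
  [set z : assignment | [forall q : 'I_Q, #|[set i | z i == q]| == Nq q]].

Definition Prob (Om : {set assignment}) (E : pred assignment) : R :=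
  #|[set z in Om | E z]|%:R / #|Om|%:R.
Definition Expect (Om : {set assignment}) (f : assignment -> R) : R :=
  (\sum_(z in Om) f z) / #|Om|%:R.

(* potential outcomes Y i q = Y_i(q) *)
Definition Ybar (Y : 'I_n -> 'I_Q -> R) (q : 'I_Q) : R :=
  (n%:R)^-1 * \sum_(i < n) Y i q.

Definition QU (Nq : 'I_Q -> nat) : {set 'I_Q} := [set q | Nq q == 1%N].

(* observed outcome of the (unique, when N_q = 1) unit assigned to q *)
Definition Yobs (Y : 'I_n -> 'I_Q -> R) (z : assignment) (q : 'I_Q) : R :=
  \sum_(i < n | z i == q) Y i q.

Definition Yhat_grp (Y : 'I_n -> 'I_Q -> R) (B : {set 'I_Q}) (z : assignment) : R :=
  (#|B|%:R)^-1 * \sum_(q in B) Yobs Y z q.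

Definition Ybar_grp (Y : 'I_n -> 'I_Q -> R) (B : {set 'I_Q}) : R :=
  (#|B|%:R)^-1 * \sum_(q in B) Ybar Y q.

Definition vhat (P : {set {set 'I_Q}}) (w : 'I_Q -> R) (Y : 'I_n -> 'I_Q -> R)
  (z : assignment) : R :=
  \sum_(B in P) \sum_(q in B) w q * (Yobs Y z q - Yhat_grp Y B z) ^+ 2.

End Defs.
Arguments CR_support {n Q} Nq.
Arguments Prob {n Q} Om E.
Arguments Expect {n Q} Om f.
Arguments Ybar {n Q} Y q.
Arguments QU {Q} Nq.
Arguments Yobs {n Q} Y z q.
Arguments Yhat_grp {n Q} Y B z.
Arguments Ybar_grp {n Q} Y B.
Arguments vhat {n Q} P w Y z.

(* Main.v *)
Require Import Defs.
From HB Require Import structures.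
From mathcomp Require Import all_boot all_order all_algebra.
From mathcomp Require Import fingroup perm Rstruct ring lra.
Set Implicit Arguments. Unset Strict Implicit. Unset Printing Implicit Defensive.
Import Order.TTheory GRing.Theory Num.Theory.
Local Open Scope ring_scope.

Lemma cs_sum (I : finType) (A : {pred I}) (v : I -> R) :
  (\sum_(i in A) v i)^+2 <= #|A|%:R * \sum_(i in A) v i ^+ 2.
Proof.
have H : 0 <= \sum_(i in A) \sum_(j in A) (v i - v j)^+2.
  by apply: sumr_ge0 => i _; apply: sumr_ge0 => j _; exact: sqr_ge0.
have E : \sum_(i in A) \sum_(j in A) (v i - v j)^+2 =
   \sum_(i in A) \sum_(j in A) v i ^+ 2 + \sum_(i in A) \sum_(j in A) v j ^+ 2
   + \sum_(i in A) \sum_(j in A) (- 2 * (v i * v j)).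
  rewrite -!big_split /=; apply: eq_bigr => i _.
  rewrite -!big_split /=; apply: eq_bigr => j _; ring.
have E1 : \sum_(i in A) \sum_(j in A) v i ^+ 2 = #|A|%:R * \sum_(i in A) v i ^+ 2.
  by rewrite mulr_sumr; apply: eq_bigr => i _; rewrite sumr_const mulr_natl.
have E2 : \sum_(i in A) \sum_(j in A) v j ^+ 2 = #|A|%:R * \sum_(i in A) v i ^+ 2.
  by rewrite sumr_const mulr_natl.
have E3 : \sum_(i in A) \sum_(j in A) (- 2 * (v i * v j)) = - 2 * (\sum_(i in A) v i)^+2.
  rewrite expr2 mulr_suml mulr_sumr; apply: eq_bigr => i _; rewrite !mulr_sumr.
  by apply: eq_bigr => j _; rewrite mulrA.
rewrite E E1 E2 E3 in H; lra.
Qed.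
Section ES.
Variables (n Q : nat) (Nq : 'I_Q -> nat).
Local Notation AS := (assignment n Q).
Local Notation Om := (@CR_support n Q Nq).
Implicit Types (L : {set 'I_Q}) (z : AS) (f g : AS -> R).

Definition swapf (z : AS) (c a : 'I_n) : AS := [ffun i => z (tperm c a i)].

Lemma swapfK z c a : swapf (swapf z c a) c a = z.
Proof. by apply/ffunP=> i; rewrite !ffunE tpermK. Qed.

Lemma card_swap z c a q :
  #|[set i | swapf z c a i == q]| = #|[set i | z i == q]|.
Proof.
rewrite -(card_preimset [set i | z i == q] (@perm_inj _ (tperm c a))).
by apply: eq_card => i; rewrite !inE ffunE.
Qed.

Lemma inOm z : (z \in Om) = [forall q, #|[set i | z i == q]| == Nq q].
Proof. by rewrite inE. Qed.

Lemma swapf_Om z c a : (swapf z c a \in Om) = (z \in Om).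
Proof. by rewrite !inOm; apply: eq_forallb => q; rewrite card_swap. Qed.

Definition agree (L : {set 'I_Q}) (z z' : AS) :=
  [forall i, ((z i \in L) || (z' i \in L)) ==> (z i == z' i)].

Lemma agreeP (L : {set 'I_Q}) (z z' : AS) : reflect (forall i, (z i \in L) || (z' i \in L) -> z i = z' i)
  (agree L z z').
Proof.
apply: (iffP forallP) => H i.
  by move=> Hi; apply/eqP; move/implyP: (H i); apply.
by apply/implyP => Hi; apply/eqP; apply: H.
Qed.

Lemma agree_refl L z : agree L z z.
Proof. by apply/agreeP. Qed.

Lemma agree_sym L z z' : agree L z z' -> agree L z' z.
Proof. by move/agreeP=> H; apply/agreeP=> i Hi; rewrite H // orbC. Qed.

Lemma agree_trans L z1 z2 z3 : agree L z1 z2 -> agree L z2 z3 -> agree L z1 z3.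
Proof.
move/agreeP=> H1 /agreeP H2; apply/agreeP=> i /orP[Hi|Hi].
  have e1 : z1 i = z2 i by apply: H1; rewrite Hi.
  have e2 : z2 i = z3 i by apply: H2; rewrite -e1 Hi.
  by rewrite e1 e2.
have e2 : z2 i = z3 i by apply: H2; rewrite Hi orbT.
have e1 : z1 i = z2 i by apply: H1; rewrite e2 Hi orbT.
by rewrite e1 e2.
Qed.

Lemma agree_sub L L' z z' : L \subset L' -> agree L' z z' -> agree L z z'.
Proof.
move=> /subsetP sL /agreeP H; apply/agreeP=> i /orP[Hi|Hi]; apply: H.
  by rewrite (sL _ Hi).
by rewrite (sL _ Hi) orbT.
Qed.

Definition fib L z := [set z' in Om | agree L z z'].

Lemma fibE L z z' : (z' \in fib L z) = (z' \in Om) && agree L z z'.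
Proof. by rewrite inE. Qed.

Lemma fib_eq L z z' : agree L z z' -> fib L z = fib L z'.
Proof.
move=> H; apply/setP=> y; rewrite !fibE; congr (_ && _).
apply/idP/idP => H'.
  exact: agree_trans (agree_sym H) H'.
exact: agree_trans H H'.
Qed.

Lemma fib_self L z : z \in Om -> z \in fib L z.
Proof. by move=> Hz; rewrite fibE Hz agree_refl. Qed.

Definition cm L (f : AS -> R) z := (\sum_(z' in fib L z) f z') / #|fib L z|%:R.

Lemma cm_inv L f z z' : agree L z z' -> cm L f z = cm L f z'.
Proof. by move=> H; rewrite /cm (fib_eq H). Qed.

Lemma tower L f g : {in Om &, forall z z', agree L z z' -> g z = g z'} ->
  \sum_(z in Om) cm L f z * g z = \sum_(z in Om) f z * g z.
Proof.
move=> Hg.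
have E1 : forall z, cm L f z * g z =
   \sum_(z' in Om) (if agree L z z' then f z' * g z / #|fib L z|%:R else 0).
  move=> z; rewrite /cm mulrAC big_distrl /= big_distrl /=.
  rewrite [RHS]big_mkcond /= [LHS]big_mkcond /=; apply: eq_bigr => y _.
  by rewrite fibE; case: (y \in Om); case: agree => //; rewrite mulrAC.
rewrite (eq_bigr _ (fun z _ => E1 z)) exchange_big /=.
apply: eq_bigr => y Hy.
transitivity (\sum_(z in Om) (if agree L y z then f y * g y / #|fib L y|%:R else 0)).
  apply: eq_bigr => z Hz; case: ifP => H; case: ifP => H' //.
  - by rewrite (Hg z y) // (fib_eq H).
  - by rewrite (agree_sym H) in H'.
  - by rewrite (agree_sym H') in H.
rewrite -big_mkcondr /=.
rewrite (eq_bigl (fun z => z \in fib L y)); last by move=> z; rewrite fibE.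
rewrite sumr_const.
have : (0 < #|fib L y|)%N by apply/card_gt0P; exists y; exact: fib_self.
move=> Hp.
have Hk : (#|fib L y|%:R : R) != 0 by rewrite pnatr_eq0 -lt0n.
by rewrite -mulr_natr; field.
Qed.


Lemma pyth L L' f c0 : L \subset L' ->
  \sum_(z in Om) (cm L' f z - c0)^+2 =
  \sum_(z in Om) (cm L' f z - cm L f z)^+2 + \sum_(z in Om) (cm L f z - c0)^+2.
Proof.
move=> sL.
have Hg : {in Om &, forall z z', agree L' z z' -> (cm L f z - c0) = (cm L f z' - c0)}.
  by move=> z z' _ _ H; rewrite (cm_inv f (agree_sub sL H)).
have Hg0 : {in Om &, forall z z', agree L z z' -> (cm L f z - c0) = (cm L f z' - c0)}.
  by move=> z z' _ _ H; rewrite (cm_inv f H).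
have T1 := @tower L' f _ Hg.
have T2 := @tower L f _ Hg0.
have H0 : \sum_(z in Om) (cm L' f z - cm L f z) * (cm L f z - c0) = 0.
  rewrite (eq_bigr (fun z => cm L' f z * (cm L f z - c0) - cm L f z * (cm L f z - c0))); last by move=> z _; rewrite mulrBl.
  by rewrite sumrB T1 T2 subrr.
rewrite -big_split /=.
transitivity (\sum_(z in Om) ((cm L' f z - cm L f z)^+2 + (cm L f z - c0)^+2 + 2 * ((cm L' f z - cm L f z) * (cm L f z - c0)))).
  by apply: eq_bigr => z _; ring.
by rewrite big_split /= -mulr_sumr H0 mulr0 addr0.
Qed.

Lemma cm0 f z : cm set0 f z = Expect Om f.
Proof.
rewrite /cm /Expect; have -> : fib set0 z = Om.
  apply/setP=> y; rewrite fibE; case: (y \in Om) => //=.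
  by apply/agreeP=> i; rewrite !inE.
by [].
Qed.

Lemma cm_full L f z : {in Om &, forall z z', agree L z z' -> f z = f z'} -> z \in Om ->
  cm L f z = f z.
Proof.
move=> Hf Hz; rewrite /cm.
rewrite (eq_bigr (fun _ => f z)); last first.
  by move=> y; rewrite fibE => /andP[Hy Ha]; rewrite (Hf z y).
have Hk : (#|fib L z|%:R : R) != 0.
  by rewrite pnatr_eq0 -lt0n; apply/card_gt0P; exists z; exact: fib_self.
by rewrite sumr_const -mulr_natr; field.
Qed.

Lemma uniqOm z q i j : z \in Om -> Nq q = 1%N -> z i = q -> z j = q -> i = j.
Proof.
rewrite inOm => /forallP /(_ q) /eqP H1 Hq; rewrite Hq in H1.
move/eqP: H1 => /cards1P [x Hx] Hi Hj.
have : i \in [set k | z k == q] by rewrite inE Hi.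
have : j \in [set k | z k == q] by rewrite inE Hj.
by rewrite Hx !inE => /eqP -> /eqP ->.
Qed.

Lemma exOm z q : z \in Om -> Nq q = 1%N -> exists c, z c = q.
Proof.
rewrite inOm => /forallP /(_ q) /eqP H1 H2.
have : (0 < #|[set k | z k == q]|)%N by rewrite H1 H2.
by case/card_gt0P => c; rewrite inE => /eqP; exists c.
Qed.

Definition swapq z (q : 'I_Q) (a : 'I_n) : AS :=
  [ffun i => if z i == q then z a else if i == a then q else z i].

Lemma swapqE z q c a : z \in Om -> Nq q = 1%N -> z c = q ->
  swapq z q a = swapf z c a.
Proof.
move=> Hz Hq Hc; apply/ffunP => i; rewrite !ffunE.
case: (tpermP c a i) => [->|->|Hic Hia].
- by rewrite Hc eqxx.
- case: eqP => [Ha|_]; last by rewrite eqxx.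
  by rewrite (uniqOm Hz Hq Ha Hc).
- case: eqP => [Hi|_]; first by case: Hic; exact: (uniqOm Hz Hq Hi Hc).
  by case: eqP.
Qed.


Lemma QUP q : (q \in QU Nq) = (Nq q == 1%N).
Proof. by rewrite inE. Qed.

Lemma card_notin L z : z \in Om -> L \subset QU Nq ->
  #|[set a | z a \notin L]| = (n - #|L|)%N.
Proof.
move=> Hz /subsetP LQ.
have Hinj : {in [set a | z a \in L] &, injective z}.
  move=> i j; rewrite !inE => Hi Hj Hij.
  have Hq : Nq (z i) = 1%N by move: (LQ _ Hi); rewrite QUP => /eqP.
  by apply: (uniqOm Hz Hq) => //; rewrite Hij.
have Him : z @: [set a | z a \in L] = L.
  apply/setP => l; apply/imsetP/idP => [[a]|Hl].
    by rewrite inE => Ha ->.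
  have Hq : Nq l = 1%N by move: (LQ _ Hl); rewrite QUP => /eqP.
  by have [c Hc] := exOm Hz Hq; exists c => //; rewrite inE Hc.
have E1 : #|[set a | z a \in L]| = #|L| by rewrite -{2}Him card_in_imset.
have E2 := cardsC [set a | z a \in L].
rewrite card_ord E1 in E2.
have -> : [set a | z a \notin L] = ~: [set a | z a \in L] by apply/setP=> a; rewrite !inE.
move: E2; set m := #|~: _| => E2; by rewrite -E2 addKn.
Qed.

Lemma swap_cond L q z c a z' : q \in QU Nq -> q \notin L -> z \in Om ->
  z c = q -> z a \notin L ->
  ((swapf z' c a \in fib L z) && (swapf z' c a a == q)) = (z' \in fib (q |: L) z).
Proof.
move=> qQ qL Hz Hc Hza.
have Hq : Nq q = 1%N by apply/eqP; rewrite -QUP.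
rewrite !fibE swapf_Om ffunE tpermR.
case Hz' : (z' \in Om) => //=.
apply/idP/idP.
- case/andP => /agreeP HA /eqP Hz'c; apply/agreeP => i.
  case: (eqVneq i c) => [->|Hic]; first by rewrite Hc Hz'c.
  case: (eqVneq i a) => [Hia|Hia].
    rewrite Hia !inE => H; exfalso.
    case/orP: H => [/orP[/eqP Hzaq|HzaL]| /orP[/eqP Hz'aq|Hz'aL]].
    - by move/eqP: Hic; apply; rewrite Hia; exact: (uniqOm Hz Hq Hzaq Hc).
    - by rewrite HzaL in Hza.
    - by move/eqP: Hic; apply; rewrite Hia; exact: (uniqOm Hz' Hq Hz'aq Hz'c).
    - have := HA c; rewrite ffunE tpermL Hz'aL orbT => /(_ isT) Hcq.
      by move: qL; rewrite -Hc Hcq Hz'aL.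
  have Ht : tperm c a i = i by apply: tpermD; rewrite eq_sym.
  rewrite !inE => H.
  case/orP: H => [/orP[/eqP Hziq|HziL]| /orP[/eqP Hz'iq|Hz'iL]].
  - by move/eqP: Hic; case; exact: (uniqOm Hz Hq Hziq Hc).
  - by have := HA i; rewrite ffunE Ht HziL => /(_ isT).
  - by move/eqP: Hic; case; exact: (uniqOm Hz' Hq Hz'iq Hz'c).
  - by have := HA i; rewrite ffunE Ht Hz'iL orbT => /(_ isT).
- move/agreeP => HA.
  have Hz'c : z' c = q by rewrite -(HA c) ?Hc // !inE eqxx.
  rewrite Hz'c eqxx andbT.
  apply/agreeP => i; rewrite ffunE.
  case: (tpermP c a i) => [Hi|Hi|Hic Hia] H.
  - exfalso; rewrite Hi Hc (negPf qL) /= in H.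
    have := HA a; rewrite !inE H !orbT => /(_ isT) Ha.
    by move: Hza; rewrite Ha H.
  - exfalso; rewrite Hi (negPf Hza) Hz'c (negPf qL) in H.
    by [].
  - by apply: HA; rewrite !inE; case/orP: H => ->; rewrite ?orbT.
Qed.

Lemma sum_unique (z : AS) q (F : 'I_n -> R) c : z \in Om -> Nq q = 1%N -> z c = q ->
  \sum_(a | z a == q) F a = F c.
Proof.
move=> Hz Hq Hc; apply: big_pred1 => a /=.
apply/eqP/eqP => [H|->//]; exact: (uniqOm Hz Hq H Hc).
Qed.

Lemma fib_split L q z (h : AS -> R) : q \in QU Nq -> q \notin L -> z \in Om ->
  \sum_(y in fib L z) h y =
  \sum_(a | z a \notin L) \sum_(z' in fib (q |: L) z) h (swapq z' q a).
Proof.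
move=> qQ qL Hz.
have Hq : Nq q = 1%N by apply/eqP; rewrite -QUP.
have [c Hc] := exOm Hz Hq.
transitivity (\sum_(y in fib L z) \sum_a (if y a == q then h y else 0)).
  apply: eq_bigr => y; rewrite fibE => /andP[Hy _].
  have [c' Hc'] := exOm Hy Hq.
  by rewrite -big_mkcond /= (sum_unique (fun _ => h y) Hy Hq Hc').
rewrite exchange_big /= (bigID (fun a => z a \notin L)) /=.
rewrite [X in _ + X]big1 ?addr0; last first.
  move=> a; rewrite negbK => HaL; apply: big1 => y; rewrite fibE => /andP[_ /agreeP HA].
  have := HA a; rewrite HaL => /(_ isT) <-.
  by case: eqP => // Hq'; move: qL; rewrite -Hq' HaL.
apply: eq_bigr => a Ha.
rewrite -big_mkcondr /=.
have inj_s : injective (fun y : AS => swapf y c a).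
  by apply: (@can_inj _ _ _ (fun y => swapf y c a)) => y; exact: swapfK.
rewrite (reindex_inj inj_s) /=.
apply: eq_big => z'.
  exact: (swap_cond z' qQ qL Hz Hc Ha).
rewrite (swap_cond z' qQ qL Hz Hc Ha) fibE => /andP[Hz' HA].
have Hz'c : z' c = q.
  by move/agreeP: HA => HA; rewrite -(HA c) ?Hc // !inE eqxx.
by rewrite (swapqE a Hz' Hq Hz'c).
Qed.


Lemma div_sq_le (T X p : R) : 0 < p -> T^+2 <= p * X -> (T / p)^+2 <= X / p.
Proof.
move=> hp h; rewrite expr_div_n ler_pdivrMr ?exprn_gt0 //.
have hp0 : p != 0 by rewrite gt_eqF.
have -> : X / p * p ^+ 2 = p * X by field.
exact: h.
Qed.

Definition Gs L q f z :=
  (n - #|L|)%:R^-1 * \sum_(a | z a \notin L) (f z - f (swapq z q a))^+2.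

Lemma step_pt L q f z : L \subset QU Nq -> q \in QU Nq -> q \notin L -> z \in Om ->
  (cm (q |: L) f z - cm L f z)^+2 <= cm (q |: L) (Gs L q f) z.
Proof.
move=> LQ qQ qL Hz.
set F' := fib (q |: L) z.
set AV := [set a | z a \notin L].
have Hq : Nq q = 1%N by apply/eqP; rewrite -QUP.
have [c Hc] := exOm Hz Hq.
have HN : #|AV| = (n - #|L|)%N := card_notin Hz LQ.
have Hk : (0 < #|F'|)%N by apply/card_gt0P; exists z; exact: fib_self.
have HNp : (0 < #|AV|)%N by apply/card_gt0P; exists c; rewrite inE Hc.
have sAV : forall (G : 'I_n -> R), \sum_(a | z a \notin L) G a = \sum_(a in AV) G a.
  by move=> G; apply: eq_bigl => a; rewrite inE.
set k := (#|F'|%:R : R).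
set N := (#|AV|%:R : R).
have kp : 0 < k by rewrite ltr0n.
have Np : 0 < N by rewrite ltr0n.
set D := fun a z' => f z' - f (swapq z' q a).
have split1 := @fib_split L q z f qQ qL Hz.
have split0 := @fib_split L q z (fun _ => 1) qQ qL Hz.
rewrite sAV in split1; rewrite sAV in split0.
have Hcard : (#|fib L z|%:R : R) = N * k.
  rewrite -sumr_const split0 /=; under eq_bigr do rewrite sumr_const.
  by rewrite sumr_const -/k -mulr_natl.
have cmL : cm L f z = (\sum_(a in AV) \sum_(z' in F') f (swapq z' q a)) / (N * k).
  by rewrite /cm split1 Hcard.
have cmL' : cm (q |: L) f z = (\sum_(z' in F') f z') / k by [].
set T := \sum_(a in AV) \sum_(z' in F') D a z'.
have HT : cm (q |: L) f z - cm L f z = T / (N * k).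
  rewrite cmL cmL' /T /D /=.
  rewrite [in RHS](eq_bigr (fun a => \sum_(z' in F') f z' - \sum_(z' in F') f (swapq z' q a))); last by move=> a _; rewrite sumrB.
  rewrite sumrB sumr_const -/N -mulr_natl -/N.
  have k0 : k != 0 by rewrite gt_eqF.
  have N0 : N != 0 by rewrite gt_eqF.
  by field; apply/andP; split; [exact k0 | exact N0].
set X := \sum_(a in AV) \sum_(z' in F') (D a z')^+2.
have HR : cm (q |: L) (Gs L q f) z = X / (N * k).
  rewrite /cm -/F' /Gs.
  rewrite -mulr_sumr.
  have -> : ((n - #|L|)%N%:R : R) = N by rewrite /N HN.
  have k0 : k != 0 by rewrite gt_eqF.
  have N0 : N != 0 by rewrite gt_eqF.
  suff E : \sum_(z' in F') \sum_(a | z' a \notin L) (f z' - f (swapq z' q a)) ^+ 2 = X.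
    rewrite E -/k. field; apply/andP; split; [exact k0 | exact N0].
  rewrite /X exchange_big /=.
  apply: eq_bigr => z' Hz'.
  move: Hz'; rewrite fibE => /andP[_ HA].
  have HA' := agree_sub (subsetUr [set q] L) HA.
  apply: eq_bigl => a; rewrite inE.
  move/agreeP: HA' => HA'.
  case Ha: (z a \in L).
    by rewrite -(HA' a) ?Ha.
  case Ha': (z' a \in L) => //.
  by rewrite (HA' a) ?Ha' ?orbT in Ha.
rewrite HT HR.
apply: div_sq_le; first exact: mulr_gt0.
apply: (le_trans (cs_sum _ _)).
rewrite -/N -mulrA ler_pM2l //.
rewrite mulr_sumr; apply: ler_sum => a _.
exact: (cs_sum _ _).
Qed.

Lemma step L q f : L \subset QU Nq -> q \in QU Nq -> q \notin L ->
  \sum_(z in Om) (cm (q |: L) f z - cm L f z)^+2 <= \sum_(z in Om) Gs L q f z.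
Proof.
move=> LQ qQ qL.
apply: (le_trans (y := \sum_(z in Om) cm (q |: L) (Gs L q f) z * 1)).
  by apply: ler_sum => z Hz; rewrite mulr1; exact: step_pt.
rewrite (@tower (q |: L) (Gs L q f) (fun _ => 1)) //.
by under eq_bigr do rewrite mulr1.
Qed.


Lemma ES_seq f Bd :
  (forall L q, L \subset QU Nq -> q \in QU Nq -> q \notin L ->
     \sum_(z in Om) Gs L q f z <= Bd) ->
  forall s : seq 'I_Q, uniq s -> {subset s <= QU Nq} ->
  \sum_(z in Om) (cm [set x in s] f z - Expect Om f)^+2 <= (size s)%:R * Bd.
Proof.
move=> Hstep; elim/last_ind => [|s q IH].
  move=> _ _; rewrite mul0r.
  have -> : [set x in [::] : seq 'I_Q] = set0 by apply/setP=> x; rewrite !inE.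
  by rewrite big1 // => z _; rewrite cm0 subrr expr0n.
rewrite rcons_uniq => /andP[qs us] sub.
have subs : {subset s <= QU Nq} by move=> x Hx; apply: sub; rewrite mem_rcons inE Hx orbT.
have qQ : q \in QU Nq by apply: sub; rewrite mem_rcons inE eqxx.
have -> : [set x in rcons s q] = q |: [set x in s].
  by apply/setP=> x; rewrite !inE mem_rcons inE.
have sL : [set x in s] \subset q |: [set x in s] by apply: subsetUr.
rewrite (pyth _ _ sL).
have LQ : [set x in s] \subset QU Nq by apply/subsetP=> x; rewrite inE; exact: subs.
have qL : q \notin [set x in s] by rewrite inE.
have H1 := step f LQ qQ qL.
have H2 := Hstep _ _ LQ qQ qL.
have H3 := IH us subs.
rewrite size_rcons -[(size s).+1]addn1 natrD mulrDl mul1r addrC.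
apply: lerD => //; exact: le_trans H1 H2.
Qed.

Lemma ES f Bd :
  {in Om &, forall z z', agree (QU Nq) z z' -> f z = f z'} ->
  (forall L q, L \subset QU Nq -> q \in QU Nq -> q \notin L ->
     \sum_(z in Om) Gs L q f z <= Bd) ->
  \sum_(z in Om) (f z - Expect Om f)^+2 <= #|QU Nq|%:R * Bd.
Proof.
move=> Hf Hstep.
have sub : {subset enum (QU Nq) <= QU Nq} by move=> x; rewrite mem_enum.
have := ES_seq Hstep (enum_uniq (QU Nq)) sub.
rewrite -cardE.
have -> : [set x in enum (QU Nq)] = QU Nq by apply/setP=> x; rewrite inE mem_enum.
apply: le_trans; apply: ler_sum => z Hz.
by rewrite cm_full.
Qed.

End ES.

Section Bound.
Variables (n Q : nat) (Nq : 'I_Q -> nat) (Y : 'I_n -> 'I_Q -> R)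
  (P : {set {set 'I_Q}}) (w : 'I_Q -> R) (wbar Delta zeta : R).
Hypothesis HP : partition P (QU Nq).
Hypothesis H3 : forall q : 'I_Q,
        (n%:R)^-1 * \sum_(i < n) (Y i q - Ybar Y q) ^+ 4 <= Delta ^+ 4.
Hypothesis Hsz : forall B, B \in P -> (2 <= #|B|)%N.
Hypothesis H6 : forall B, B \in P -> forall q, q \in B ->
        `|Ybar Y q - Ybar_grp Y B| <= zeta.
Hypothesis Hw : forall q, q \in QU Nq -> `|w q| <= wbar.

Local Notation QUs := (QU Nq).
Implicit Types (B : {set 'I_Q}).

Definition gm (B : {set 'I_Q}) (v : 'I_Q -> R) := #|B|%:R^-1 * \sum_(t in B) v t.
Definition Bk r := pblock P r.

Lemma triv : trivIset P.
Proof. by case/and3P: HP. Qed.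
Lemma cov : cover P = QUs.
Proof. by case/and3P: HP => /eqP. Qed.

Lemma Bk_in r : r \in QUs -> Bk r \in P.
Proof. by move=> Hr; apply: pblock_mem; rewrite cov. Qed.
Lemma r_in_Bk r : r \in QUs -> r \in Bk r.
Proof. by move=> Hr; rewrite /Bk mem_pblock cov. Qed.
Lemma Bk_sub r : r \in QUs -> {subset Bk r <= QUs}.
Proof.
move=> Hr t Ht; rewrite -cov; apply/bigcupP; exists (Bk r) => //; exact: Bk_in.
Qed.
Lemma Bk_eq r t : r \in QUs -> t \in Bk r -> Bk t = Bk r.
Proof. by move=> Hr Ht; apply: same_pblock => //; exact: triv. Qed.
Lemma Bk_pos r : r \in QUs -> 0 < (#|Bk r|%:R : R).
Proof. by move=> Hr; rewrite ltr0n; apply: leq_trans (Hsz (Bk_in Hr)). Qed.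

Lemma sum_blocks (G : 'I_Q -> R) :
  \sum_(r in QUs) G r = \sum_(B in P) \sum_(r in B) G r.
Proof. by rewrite -cov (big_trivIset _ triv). Qed.

Definition vh (y : 'I_Q -> R) := \sum_(r in QUs) w r * (y r - gm (Bk r) y)^+2.

Lemma vhatE z : vhat P w Y z = vh (Yobs Y z).
Proof.
rewrite /vhat /vh sum_blocks; apply: eq_bigr => B HB; apply: eq_bigr => r Hr.
by rewrite /Bk (def_pblock triv HB Hr).
Qed.

Lemma gm_le B (u v : 'I_Q -> R) : (forall t, t \in B -> u t <= v t) -> gm B u <= gm B v.
Proof.
move=> H; rewrite /gm ler_wpM2l ?invr_ge0 ?ler0n //; exact: ler_sum.
Qed.

Lemma gm_ge0 B (u : 'I_Q -> R) : (forall t, t \in B -> 0 <= u t) -> 0 <= gm B u.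
Proof. by move=> H; rewrite /gm mulr_ge0 ?invr_ge0 ?ler0n // sumr_ge0. Qed.

Lemma gmD B (u v : 'I_Q -> R) : gm B (fun t => u t + v t) = gm B u + gm B v.
Proof. by rewrite /gm big_split mulrDr. Qed.

Lemma gmZ B c (u : 'I_Q -> R) : gm B (fun t => c * u t) = c * gm B u.
Proof. by rewrite /gm -mulr_sumr mulrCA. Qed.

Lemma gmB B (u v : 'I_Q -> R) : gm B (fun t => u t - v t) = gm B u - gm B v.
Proof. by rewrite /gm sumrB mulrBr. Qed.

Lemma gmC B c : (0 < #|B|)%N -> gm B (fun _ => c) = c.
Proof.
move=> H; rewrite /gm sumr_const -[c *+ _]mulr_natl mulrA mulVf ?mul1r //.
by rewrite pnatr_eq0 -lt0n.
Qed.

Lemma gm_sq B (v : 'I_Q -> R) : (0 < #|B|)%N -> (gm B v)^+2 <= gm B (fun t => v t ^+ 2).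
Proof.
move=> H; rewrite /gm exprMn.
have m0 : 0 < (#|B|%:R : R) by rewrite ltr0n.
have h := cs_sum B v.
rewrite expr2 -mulrA ler_pM2l ?invr_gt0 //.
rewrite -[X in _ <= X](mulKf (lt0r_neq0 m0)) ler_pM2l ?invr_gt0 //.
Qed.


Lemma block_diff B (y y' : 'I_Q -> R) : (0 < #|B|)%N ->
  \sum_(r in B) w r * ((y' r - gm B y')^+2 - (y r - gm B y)^+2) =
  \sum_(r in B) (y' r - y r) * (w r * ((y r - gm B y) + (y' r - gm B y'))
        - gm B (fun t => w t * ((y t - gm B y) + (y' t - gm B y')))).
Proof.
move=> Hpos.
set Ew := fun t => w t * ((y t - gm B y) + (y' t - gm B y')).
rewrite (eq_bigr (fun r => (y' r - y r) * Ew r - Ew r * (gm B y' - gm B y))); last first.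
  by move=> r _; rewrite /Ew; ring.
rewrite [in RHS](eq_bigr (fun r => (y' r - y r) * Ew r - (y' r - y r) * gm B Ew)); last first.
  by move=> r _; rewrite mulrBr.
rewrite !sumrB; congr (_ - _).
rewrite -!mulr_suml /gm sumrB.
ring.
Qed.

Definition Ee (y y' : 'I_Q -> R) t := (y t - gm (Bk t) y) + (y' t - gm (Bk t) y').
Definition psi (y y' : 'I_Q -> R) r :=
  w r * Ee y y' r - gm (Bk r) (fun t => w t * Ee y y' t).

Lemma vh_diff (y y' : 'I_Q -> R) :
  vh y' - vh y = \sum_(r in QUs) (y' r - y r) * psi y y' r.
Proof.
rewrite /vh -sumrB.
rewrite (eq_bigr (fun r => w r * ((y' r - gm (Bk r) y')^+2 - (y r - gm (Bk r) y)^+2))); last first.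
  by move=> r _; rewrite mulrBr.
rewrite !sum_blocks; apply: eq_bigr => B HB.
have Hpos : (0 < #|B|)%N by apply: leq_trans (Hsz HB).
have HBk : forall r, r \in B -> Bk r = B by move=> r Hr; rewrite /Bk (def_pblock triv HB Hr).
rewrite (eq_bigr (fun r => w r * ((y' r - gm B y')^+2 - (y r - gm B y)^+2))); last first.
  by move=> r Hr; rewrite HBk.
rewrite block_diff //; apply: eq_bigr => r Hr.
rewrite /psi /Ee HBk //; congr (_ * (_ - _)).
rewrite /gm; congr (_ * _); apply: eq_bigr => t Ht; by rewrite HBk.
Qed.

Lemma supp2 (v : 'I_Q -> R) q r0 : q \in QUs ->
  (forall r, r \in QUs -> r != q -> r != r0 -> v r = 0) ->
  (\sum_(r in QUs) v r)^+2 <= 2 * v q ^+ 2 + 2 * (if r0 \in QUs then v r0 ^+2 else 0).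
Proof.
move=> Hq Hv; rewrite (bigD1 q) //=.
case: (boolP (r0 \in QUs)) => Hr0.
  case: (eqVneq r0 q) => [Heq|Hne].
    rewrite big1 ?addr0; last first.
      by move=> r /andP[Hr Hrq]; apply: Hv => //; rewrite Heq.
    rewrite /= Heq; have := sqr_ge0 (v q); lra.
  rewrite (bigD1 r0) /=; last by rewrite Hr0 Hne.
  rewrite big1 ?addr0; last first.
    by move=> r /andP[/andP[Hr Hrq] Hrr0]; apply: Hv.
  rewrite /=; have := sqr_ge0 (v q - v r0); nra.
rewrite big1 ?addr0; last first.
  move=> r /andP[Hr Hrq]; apply: Hv => //.
  by apply/eqP => Heq; move: Hr0; rewrite -Heq Hr.
rewrite /=; have := sqr_ge0 (v q); lra.
Qed.


Lemma poly0 (u u' g g' z2 : R) : 0 <= u -> 0 <= u' -> 0 <= g -> 0 <= g' -> 0 <= z2 ->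
  (2 * u + 2 * u') * (4 * (3 * u + 3 * u' + 9 * g + 9 * g' + 12 * z2)) <=
  120 * (u ^+ 2 + g ^+ 2 + z2 * u + u' ^+ 2 + g' ^+ 2 + z2 * u').
Proof.
move=> hu hu' hg hg' hz.
have h1 := sqr_ge0 (u - u'). have h2 := sqr_ge0 (u + u' - g - g').
have h3 := sqr_ge0 (g - g').
nra.
Qed.

Lemma sq_nrm_le (a b : R) : `|a| <= b -> a ^+ 2 <= b ^+ 2.
Proof.
move=> h; have h0 : 0 <= b by apply: le_trans h.
move: h; rewrite ler_norml => /andP[h1 h2]; nra.
Qed.

Lemma core B s (x x' d ww : 'I_Q -> R) : s \in B -> (0 < #|B|)%N ->
  (forall t, t \in B -> `|ww t| <= wbar) -> (forall t, t \in B -> `|d t| <= zeta) ->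
  ((x' s - x s) * (ww s * ((x s - gm B x + d s) + (x' s - gm B x' + d s))
     - gm B (fun t => ww t * ((x t - gm B x + d t) + (x' t - gm B x' + d t)))))^+2
  <= 120 * wbar ^+ 2 * (x s ^+ 4 + gm B (fun t => x t ^+ 4) + zeta ^+ 2 * x s ^+ 2
        + x' s ^+ 4 + gm B (fun t => x' t ^+ 4) + zeta ^+ 2 * x' s ^+ 2).
Proof.
move=> sB Bpos Hww Hd.
set e := fun t => x t - gm B x + d t.
set e' := fun t => x' t - gm B x' + d t.
set E := fun t => e t + e' t.
rewrite -/(e s) -/(e' s).
have -> : (fun t => ww t * (x t - gm B x + d t + (x' t - gm B x' + d t))) = (fun t => ww t * E t) by [].
rewrite -/(E s).
set u := x s ^+ 2. set u' := x' s ^+ 2.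
set g := gm B (fun t => x t ^+ 2). set g' := gm B (fun t => x' t ^+ 2).
have wb0 : 0 <= wbar by apply: le_trans (Hww s sB).
have z0 : 0 <= zeta by apply: le_trans (Hd s sB).
have hw : forall t, t \in B -> ww t ^+ 2 <= wbar ^+ 2 by move=> t Ht; apply: sq_nrm_le; exact: Hww.
have hd : forall t, t \in B -> d t ^+ 2 <= zeta ^+ 2 by move=> t Ht; apply: sq_nrm_le; exact: Hd.
have h1 : (ww s * E s)^+2 <= wbar^+2 * E s ^+ 2.
  by rewrite exprMn ler_wpM2r ?sqr_ge0 ?hw.
have h2 : (gm B (fun t => ww t * E t))^+2 <= wbar^+2 * gm B (fun t => E t ^+ 2).
  apply: le_trans (gm_sq _ Bpos) _; rewrite -gmZ; apply: gm_le => t Ht.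
  by rewrite exprMn ler_wpM2r ?sqr_ge0 ?hw.
have hgx : (gm B x)^+2 <= g by apply: gm_sq.
have hgx' : (gm B x')^+2 <= g' by apply: gm_sq.
have he : forall t, t \in B -> e t ^+ 2 <= 3 * x t ^+ 2 + 3 * (gm B x)^+2 + 3 * zeta ^+ 2.
  move=> t Ht; have := hd t Ht; rewrite /e.
  have := sqr_ge0 (x t + gm B x); have := sqr_ge0 (x t - d t); have := sqr_ge0 (gm B x + d t).
  nra.
have he' : forall t, t \in B -> e' t ^+ 2 <= 3 * x' t ^+ 2 + 3 * (gm B x')^+2 + 3 * zeta ^+ 2.
  move=> t Ht; have := hd t Ht; rewrite /e'.
  have := sqr_ge0 (x' t + gm B x'); have := sqr_ge0 (x' t - d t); have := sqr_ge0 (gm B x' + d t).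
  nra.
have hE : forall t, E t ^+ 2 <= 2 * e t ^+ 2 + 2 * e' t ^+ 2.
  by move=> t; rewrite /E; have := sqr_ge0 (e t - e' t); nra.
have hgE : gm B (fun t => E t ^+ 2) <= 2 * (3 * g + 3 * (gm B x)^+2 + 3 * zeta ^+ 2)
                                   + 2 * (3 * g' + 3 * (gm B x')^+2 + 3 * zeta ^+ 2).
  apply: le_trans (gm_le (v := fun t => 2 * (3 * x t ^+ 2 + 3 * (gm B x)^+2 + 3 * zeta ^+ 2)
                               + 2 * (3 * x' t ^+ 2 + 3 * (gm B x')^+2 + 3 * zeta ^+ 2)) _) _.
    move=> t Ht; apply: le_trans (hE t) _.
    by have := he t Ht; have := he' t Ht; lra.
  rewrite gmD !gmZ !gmD !gmZ !gmC //.
have hpsi : (ww s * E s - gm B (fun t => ww t * E t))^+2 <=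
            4 * wbar ^+ 2 * (3 * u + 3 * u' + 9 * g + 9 * g' + 12 * zeta ^+ 2).
  have := sqr_ge0 (ww s * E s + gm B (fun t => ww t * E t)).
  have hEs := hE s.
  have hes := he s sB. have hes' := he' s sB.
  have w2 : 0 <= wbar ^+ 2 by apply: sqr_ge0.
  have hEs2 : E s ^+ 2 + gm B (fun t => E t ^+ 2) <= 2 * (3 * u + 3 * u' + 9 * g + 9 * g' + 12 * zeta ^+ 2).
    rewrite /u /u'; lra.
  have := ler_wpM2l w2 hEs2.
  nra.
have hdel : (x' s - x s) ^+ 2 <= 2 * u + 2 * u'.
  by rewrite /u /u'; have := sqr_ge0 (x' s + x s); nra.
have hu : 0 <= u by apply: sqr_ge0.
have hu' : 0 <= u' by apply: sqr_ge0.
have hg : 0 <= g by apply: gm_ge0 => t _; apply: sqr_ge0.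
have hg' : 0 <= g' by apply: gm_ge0 => t _; apply: sqr_ge0.
have hg4 : g ^+ 2 <= gm B (fun t => x t ^+ 4).
  apply: le_trans (gm_sq _ Bpos) _; apply: gm_le => t _; by rewrite -exprM.
have hg4' : g' ^+ 2 <= gm B (fun t => x' t ^+ 4).
  apply: le_trans (gm_sq _ Bpos) _; apply: gm_le => t _; by rewrite -exprM.
have hx4 : x s ^+ 4 = u ^+ 2 by rewrite /u -exprM.
have hx4' : x' s ^+ 4 = u' ^+ 2 by rewrite /u' -exprM.
rewrite exprMn hx4 hx4'.
have z2 : 0 <= zeta ^+ 2 by apply: sqr_ge0.
have w2 : 0 <= wbar ^+ 2 by apply: sqr_ge0.
have P0 := poly0 hu hu' hg hg' z2.
apply: le_trans (ler_pM (sqr_ge0 _) (sqr_ge0 _) hdel hpsi) _.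
have -> : (2 * u + 2 * u') * (4 * wbar ^+ 2 * (3 * u + 3 * u' + 9 * g + 9 * g' + 12 * zeta ^+ 2))
   = wbar ^+ 2 * ((2 * u + 2 * u') * (4 * (3 * u + 3 * u' + 9 * g + 9 * g' + 12 * zeta ^+ 2))) by ring.
have := ler_wpM2l w2 P0.
nra.
Qed.


Definition Hvy (y : 'I_Q -> R) s := (y s - Ybar Y s) ^+ 4
   + gm (Bk s) (fun t => (y t - Ybar Y t) ^+ 4) + zeta ^+ 2 * (y s - Ybar Y s) ^+ 2.

Lemma psi_bound (y y' : 'I_Q -> R) s : s \in QUs ->
  ((y' s - y s) * psi y y' s)^+2 <= 120 * wbar ^+ 2 * (Hvy y s + Hvy y' s).
Proof.
move=> sQ.
set B := Bk s.
have sB : s \in B by exact: r_in_Bk.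
have Bpos : (0 < #|B|)%N by apply: leq_trans (Hsz (Bk_in sQ)).
have HBk : forall t, t \in B -> Bk t = B by move=> t Ht; exact: Bk_eq.
set x := fun t => y t - Ybar Y t.
set x' := fun t => y' t - Ybar Y t.
set d := fun t => Ybar Y t - gm B (Ybar Y).
have Hd : forall t, t \in B -> `|d t| <= zeta.
  by move=> t Ht; apply: (H6 (Bk_in sQ)).
have Hww : forall t, t \in B -> `|w t| <= wbar.
  by move=> t Ht; apply: Hw; exact: (Bk_sub sQ).
have Hc := core x x' (s:=s) sB Bpos Hww Hd.
have ey : forall t, y t - gm B y = x t - gm B x + d t.
  by move=> t; rewrite /x /d gmB; ring.
have ey' : forall t, y' t - gm B y' = x' t - gm B x' + d t.
  by move=> t; rewrite /x' /d gmB; ring.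
have Epsi : psi y y' s = w s * ((x s - gm B x + d s) + (x' s - gm B x' + d s))
     - gm B (fun t => w t * ((x t - gm B x + d t) + (x' t - gm B x' + d t))).
  rewrite /psi /Ee -/B -ey -ey'; congr (_ - _).
  rewrite /gm; congr (_ * _); apply: eq_bigr => t Ht.
  by rewrite HBk // -ey -ey'.
have Ed : y' s - y s = x' s - x s by rewrite /x /x'; ring.
rewrite Epsi Ed; apply: (le_trans Hc).
by rewrite /Hvy -/B /x /x' !addrA.
Qed.

Local Notation Om := (@CR_support n Q Nq).

Lemma Yobs_unit z t c : z \in Om -> Nq t = 1%N -> z c = t -> Yobs Y z t = Y c t.
Proof. by move=> Hz Ht Hc; rewrite /Yobs (sum_unique (fun i => Y i t) Hz Ht Hc). Qed.

Lemma Yobs_swap z c a t ct : z \in Om -> Nq t = 1%N -> z ct = t ->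
  Yobs Y (swapf z c a) t = Y (tperm c a ct) t.
Proof.
move=> Hz Ht Hct; apply: Yobs_unit => //; first by rewrite swapf_Om.
by rewrite ffunE tpermK.
Qed.

Lemma pt_bound z q c a : z \in Om -> q \in QUs -> z c = q ->
  (vhat P w Y z - vhat P w Y (swapf z c a))^+2 <=
  240 * wbar ^+ 2 * (Hvy (Yobs Y z) q + Hvy (Yobs Y (swapf z c a)) q
     + (if z a \in QUs then Hvy (Yobs Y z) (z a) + Hvy (Yobs Y (swapf z c a)) (z a) else 0)).
Proof.
move=> Hz qQ Hc.
have Hq : Nq q = 1%N by apply/eqP; rewrite -QUP.
set y := Yobs Y z. set y' := Yobs Y (swapf z c a).
rewrite !vhatE -/y -/y'.
have -> : (vh y - vh y')^+2 = (vh y' - vh y)^+2 by rewrite -sqrrN opprB.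
rewrite vh_diff.
have Hsupp : forall r, r \in QUs -> r != q -> r != z a -> (y' r - y r) * psi y y' r = 0.
  move=> r rQ rq ra.
  have Hr : Nq r = 1%N by apply/eqP; rewrite -QUP.
  have [cr Hcr] := exOm Hz Hr.
  rewrite /y /y' (Yobs_swap c a Hz Hr Hcr) (Yobs_unit Hz Hr Hcr).
  rewrite tpermD ?subrr ?mul0r //.
    by apply/eqP => Hcc; move: rq; rewrite -Hcr -Hcc Hc eqxx.
  by apply/eqP => Hcc; move: ra; rewrite -Hcr -Hcc eqxx.
apply: le_trans (supp2 qQ Hsupp) _.
have B1 := psi_bound y y' qQ.
case: ifP => Har.
  have B2 := psi_bound y y' Har.
  have w2 : 0 <= wbar ^+ 2 by apply: sqr_ge0.
  lra.
lra.
Qed.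


Lemma phi_swap (phi : 'I_n -> R) c a u : (forall i, 0 <= phi i) ->
  phi (tperm c a u) <= phi u + phi a + phi c.
Proof.
move=> H; have := H u; have := H a; have := H c.
case: (tpermP c a u) => [->|->|_ _]; lra.
Qed.

Definition J s i := (Y i s - Ybar Y s) ^+ 4
   + gm (Bk s) (fun t => (Y i t - Ybar Y t) ^+ 4) + zeta ^+ 2 * (Y i s - Ybar Y s) ^+ 2.

Lemma Hv_swap z c a s : z \in Om -> s \in QUs ->
  Hvy (Yobs Y (swapf z c a)) s <= Hvy (Yobs Y z) s + J s a + J s c.
Proof.
move=> Hz sQ.
have key : forall t k, t \in QUs -> ~~ odd k ->
   (Yobs Y (swapf z c a) t - Ybar Y t) ^+ k <=
   (Yobs Y z t - Ybar Y t) ^+ k + (Y a t - Ybar Y t) ^+ k + (Y c t - Ybar Y t) ^+ k.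
  move=> t k tQ ek.
  have Ht : Nq t = 1%N by apply/eqP; rewrite -QUP.
  have [ct Hct] := exOm Hz Ht.
  rewrite (Yobs_swap c a Hz Ht Hct) (Yobs_unit Hz Ht Hct).
  have H := @phi_swap (fun i => (Y i t - Ybar Y t) ^+ k) c a ct.
  apply: H => i /=; exact: exprn_even_ge0.
have k4 := key s 4%N sQ isT.
have k2 := key s 2%N sQ isT.
have kg : gm (Bk s) (fun t => (Yobs Y (swapf z c a) t - Ybar Y t) ^+ 4) <=
   gm (Bk s) (fun t => (Yobs Y z t - Ybar Y t) ^+ 4) + gm (Bk s) (fun t => (Y a t - Ybar Y t) ^+ 4)
   + gm (Bk s) (fun t => (Y c t - Ybar Y t) ^+ 4).
  rewrite -!gmD; apply: gm_le => t Ht; apply: key => //; exact: (Bk_sub sQ).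
have z2 : 0 <= zeta ^+ 2 by apply: sqr_ge0.
have := ler_wpM2l z2 k2.
rewrite /Hvy /J; lra.
Qed.

Definition cnt i r := \sum_(z in Om) (if z i == r then 1 else 0 : R).

Lemma cnt_sym i j r : cnt i r = cnt j r.
Proof.
rewrite /cnt.
have inj_s : injective (fun y : assignment n Q => swapf y i j).
  by apply: (@can_inj _ _ _ (fun y => swapf y i j)) => y; exact: swapfK.
rewrite (reindex_inj inj_s) /=.
apply: eq_big => z; first by rewrite swapf_Om.
by rewrite ffunE tpermL.
Qed.

Lemma cnt_sum r : Nq r = 1%N -> \sum_i cnt i r = #|Om|%:R.
Proof.
move=> Hr; rewrite /cnt exchange_big /=.
rewrite -sumr_const; apply: eq_bigr => z Hz.
have [c Hc] := exOm Hz Hr.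
by rewrite -big_mkcond /= (sum_unique (fun _ => 1) Hz Hr Hc).
Qed.

Lemma cnt_val i r : Nq r = 1%N -> n%:R * cnt i r = #|Om|%:R.
Proof.
move=> Hr; rewrite -(cnt_sum Hr).
rewrite (eq_bigr (fun _ => cnt i r)); last by move=> j _; exact: cnt_sym.
by rewrite sumr_const card_ord mulr_natl.
Qed.

Lemma K1 r (h : 'I_n -> R) : Nq r = 1%N ->
  n%:R * \sum_(z in Om) \sum_(i | z i == r) h i = #|Om|%:R * \sum_i h i.
Proof.
move=> Hr.
have -> : \sum_(z in Om) \sum_(i | z i == r) h i = \sum_i h i * cnt i r.
  rewrite /cnt.
  under eq_bigr do rewrite big_mkcond /=.
  rewrite exchange_big /=; apply: eq_bigr => i _.
  rewrite mulr_sumr; apply: eq_bigr => z _.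
  by case: eqP; rewrite ?mulr1 ?mulr0.
rewrite mulr_sumr mulr_sumr; apply: eq_bigr => i _.
by rewrite mulrCA (cnt_val i Hr) mulrC.
Qed.

Lemma sum_by_val z (L : {set 'I_Q}) (h : 'I_n -> R) :
  \sum_(a | z a \in L) h a = \sum_(l in L) \sum_(a | z a == l) h a.
Proof.
rewrite (partition_big z (fun l => l \in L)) //=.
apply: eq_bigr => l Hl; apply: eq_bigl => a.
by case: (eqVneq (z a) l) => [->|_]; rewrite ?Hl ?andbF ?andbT.
Qed.

Lemma K2 (L : {set 'I_Q}) (h : 'I_n -> R) : L \subset QUs ->
  n%:R * \sum_(z in Om) \sum_(a | z a \notin L) h a
   = #|Om|%:R * (n%:R - #|L|%:R) * \sum_i h i.
Proof.
move=> /subsetP LQ.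
set cN := fun a => \sum_(z in Om) (if z a \notin L then 1 else 0 : R).
have -> : \sum_(z in Om) \sum_(a | z a \notin L) h a = \sum_a h a * cN a.
  rewrite /cN.
  under eq_bigr do rewrite big_mkcond /=.
  rewrite exchange_big /=; apply: eq_bigr => i _.
  rewrite mulr_sumr; apply: eq_bigr => z _.
  by case: ifP; rewrite ?mulr1 ?mulr0.
have HcN : forall a, n%:R * cN a = #|Om|%:R * (n%:R - #|L|%:R).
  move=> a.
  have -> : cN a = #|Om|%:R - \sum_(l in L) cnt a l.
    rewrite /cN /cnt exchange_big /= -sumr_const -sumrB; apply: eq_bigr => z _.
    case: (boolP (z a \in L)) => Hza /=.
      rewrite -big_mkcondr /= (big_pred1 (z a)) ?subrr // => l /=.
      by apply/andP/eqP => [[_ /eqP ->]|->]; rewrite ?Hza ?eqxx.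
    rewrite big1 ?subr0 // => l Hl; case: eqP => // Hzl.
    by move: Hza; rewrite Hzl Hl.
  rewrite mulrBr mulr_sumr.
  rewrite (eq_bigr (fun l => #|Om|%:R)); last first.
    move=> l Hl; apply: cnt_val; by apply/eqP; rewrite -QUP; apply: LQ.
  by rewrite sumr_const -[#|Om|%:R *+ _]mulr_natl; ring.
rewrite mulr_sumr mulr_sumr; apply: eq_bigr => i _.
by rewrite mulrCA HcN mulrC.
Qed.


Lemma S4 t : \sum_i (Y i t - Ybar Y t) ^+ 4 <= n%:R * Delta ^+ 4.
Proof.
case: (posnP n) => [n0|npos].
  rewrite big1; last by move=> i; move: (ltn_ord i); rewrite {2}n0.
  by rewrite n0 mul0r.
have np : 0 < (n%:R : R) by rewrite ltr0n.
rewrite -[X in X <= _](mulVKf (lt0r_neq0 np)) ler_pM2l //.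
Qed.

Lemma S2 t : \sum_i (Y i t - Ybar Y t) ^+ 2 <= n%:R * Delta ^+ 2.
Proof.
have h := cs_sum 'I_n (fun i => (Y i t - Ybar Y t) ^+ 2).
rewrite [X in _ <= _ * X](eq_bigr (fun i => (Y i t - Ybar Y t) ^+ 4)) in h; last first.
  by move=> i _ /=; rewrite -exprM.
rewrite cardT size_enum_ord in h.
have h4 := S4 t.
have n0 : 0 <= (n%:R : R) by apply: ler0n.
have hb := ler_wpM2l n0 h4.
set a := \sum_i _ in h *.
have a0 : 0 <= a by apply: sumr_ge0 => i _; apply: sqr_ge0.
have d0 : 0 <= Delta ^+ 2 by apply: sqr_ge0.
have e : n%:R * (n%:R * Delta ^+ 4) = (n%:R * Delta ^+ 2) ^+ 2 by rewrite -[Delta ^+ 4]/(Delta ^+ (2 * 2)) exprM; ring.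
rewrite e in hb.
have hab := le_trans h hb.
have b0 : 0 <= n%:R * Delta ^+ 2 by apply: mulr_ge0.
nra.
Qed.

Lemma gm_sum (I : finType) (A : {pred I}) B (F : I -> 'I_Q -> R) :
  \sum_(i in A) gm B (F i) = gm B (fun t => \sum_(i in A) F i t).
Proof. by rewrite /gm -mulr_sumr exchange_big. Qed.

Definition beta := 2 * Delta ^+ 4 + zeta ^+ 2 * Delta ^+ 2.

Lemma beta_ge0 : 0 <= beta.
Proof.
rewrite /beta; apply: addr_ge0; first by apply: mulr_ge0 => //; apply: exprn_even_ge0.
by apply: mulr_ge0; apply: sqr_ge0.
Qed.

Lemma SJ r : r \in QUs -> \sum_i J r i <= n%:R * beta.
Proof.
move=> rQ.
have Bpos : (0 < #|Bk r|)%N by apply: leq_trans (Hsz (Bk_in rQ)).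
rewrite /J big_split /= big_split /= gm_sum -mulr_sumr.
have g : gm (Bk r) (fun t => \sum_i (Y i t - Ybar Y t) ^+ 4) <= n%:R * Delta ^+ 4.
  apply: le_trans (gm_le (v := fun _ => n%:R * Delta ^+ 4) _) _.
    by move=> t _; exact: S4.
  by rewrite gmC.
have h4 := S4 r. have h2 := S2 r.
have z2 : 0 <= zeta ^+ 2 by apply: sqr_ge0.
have := ler_wpM2l z2 h2.
rewrite /beta; lra.
Qed.

Lemma powobs z t k : z \in Om -> t \in QUs ->
  (Yobs Y z t - Ybar Y t) ^+ k = \sum_(i | z i == t) (Y i t - Ybar Y t) ^+ k.
Proof.
move=> Hz tQ.
have Ht : Nq t = 1%N by apply/eqP; rewrite -QUP.
have [c Hc] := exOm Hz Ht.
by rewrite (Yobs_unit Hz Ht Hc) (sum_unique (fun i => (Y i t - Ybar Y t) ^+ k) Hz Ht Hc).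
Qed.

Lemma Hv_K1 r : r \in QUs ->
  n%:R * \sum_(z in Om) Hvy (Yobs Y z) r = #|Om|%:R * \sum_i J r i.
Proof.
move=> rQ.
have Hr : Nq r = 1%N by apply/eqP; rewrite -QUP.
have E : forall z, z \in Om -> Hvy (Yobs Y z) r =
   \sum_(i | z i == r) (Y i r - Ybar Y r) ^+ 4
   + gm (Bk r) (fun t => \sum_(i | z i == t) (Y i t - Ybar Y t) ^+ 4)
   + zeta ^+ 2 * \sum_(i | z i == r) (Y i r - Ybar Y r) ^+ 2.
  move=> z Hz; rewrite /Hvy !powobs //; congr (_ + _ + _).
  rewrite /gm; congr (_ * _); apply: eq_bigr => t Ht.
  by rewrite powobs //; exact: (Bk_sub rQ).
rewrite (eq_bigr _ E) big_split /= big_split /= gm_sum -mulr_sumr.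
rewrite /J big_split /= big_split /= gm_sum -mulr_sumr !mulrDr.
congr (_ + _ + _).
- exact: K1.
- rewrite -!gmZ /gm; congr (_ * _); apply: eq_bigr => t Ht.
  apply: K1; apply/eqP; rewrite -QUP; exact: (Bk_sub rQ).
- rewrite mulrCA [in RHS]mulrCA; congr (_ * _); exact: K1.
Qed.


Lemma sum_by_val2 z (S : {set 'I_Q}) (h : 'I_Q -> 'I_n -> R) :
  \sum_(a | z a \in S) h (z a) a = \sum_(l in S) \sum_(a | z a == l) h l a.
Proof.
rewrite (partition_big z (fun l => l \in S)) //=.
apply: eq_bigr => l Hl; apply: eq_big => a.
  by case: (eqVneq (z a) l) => [->|_]; rewrite ?Hl ?andbF ?andbT.
by case/andP => _ /eqP ->.
Qed.

Lemma sum_const_unique z r (K : R) : z \in Om -> Nq r = 1%N ->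
  \sum_(a | z a == r) K = K.
Proof.
move=> Hz Hr; have [c Hc] := exOm Hz Hr.
exact: (sum_unique (fun _ => K) Hz Hr Hc).
Qed.

Lemma sum_notin_const z (L : {set 'I_Q}) (K : R) : z \in Om -> L \subset QUs ->
  \sum_(a | z a \notin L) K = (n - #|L|)%N%:R * K.
Proof.
move=> Hz LQ.
rewrite (eq_bigl (fun a => a \in [set a | z a \notin L])); last by move=> a; rewrite inE.
by rewrite sumr_const (card_notin Hz LQ) mulr_natl.
Qed.

Lemma card_in z (L : {set 'I_Q}) : z \in Om -> L \subset QUs ->
  #|[set a | z a \in L]| = #|L|.
Proof.
move=> Hz /subsetP LQ.
have Hinj : {in [set a | z a \in L] &, injective z}.
  move=> i j; rewrite !inE => Hi Hj Hij.
  have Hq : Nq (z i) = 1%N by move: (LQ _ Hi); rewrite QUP => /eqP.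
  by apply: (uniqOm Hz Hq) => //; rewrite Hij.
have Him : z @: [set a | z a \in L] = L.
  apply/setP => l; apply/imsetP/idP => [[a]|Hl].
    by rewrite inE => Ha ->.
  have Hq : Nq l = 1%N by move: (LQ _ Hl); rewrite QUP => /eqP.
  by have [c Hc] := exOm Hz Hq; exists c => //; rewrite inE Hc.
by rewrite -{2}Him card_in_imset.
Qed.

Definition Phi q z a :=
  2 * Hvy (Yobs Y z) q + J q a + \sum_(i | z i == q) J q i
  + (if z a \in QUs then 2 * Hvy (Yobs Y z) (z a) + J (z a) a
                          + \sum_(i | z i == q) J (z a) i else 0).

Lemma Gs_pt (L : {set 'I_Q}) q z : L \subset QUs -> q \in QUs -> z \in Om ->
  Gs L q (vhat P w Y) z <=
  (n - #|L|)%N%:R^-1 * \sum_(a | z a \notin L) (240 * wbar ^+ 2 * Phi q z a).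
Proof.
move=> LQ qQ Hz.
have Hq : Nq q = 1%N by apply/eqP; rewrite -QUP.
have [c Hc] := exOm Hz Hq.
rewrite /Gs ler_wpM2l ?invr_ge0 ?ler0n //.
apply: ler_sum => a _.
rewrite (swapqE a Hz Hq Hc).
apply: le_trans (pt_bound a Hz qQ Hc) _.
have w2 : 0 <= 240 * wbar ^+ 2 by apply: mulr_ge0 => //; apply: sqr_ge0.
rewrite ler_wpM2l //.
have Jc : forall s, \sum_(i | z i == q) J s i = J s c.
  by move=> s; exact: (sum_unique (fun i => J s i) Hz Hq Hc).
rewrite /Phi !Jc.
have h1 := Hv_swap c a Hz qQ.
case: ifP => Ha.
  have h2 := Hv_swap c a Hz Ha.
  lra.
lra.
Qed.

Lemma Phi_sum (L : {set 'I_Q}) q z : L \subset QUs -> q \in QUs -> q \notin L -> z \in Om ->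
  \sum_(a | z a \notin L) Phi q z a =
   (n - #|L|)%N%:R * (2 * Hvy (Yobs Y z) q + \sum_(i | z i == q) J q i)
   + \sum_(a | z a \notin L) J q a
   + \sum_(r in QUs :\: L) (2 * Hvy (Yobs Y z) r + \sum_(a | z a == r) J r a
                           + \sum_(i | z i == q) J r i).
Proof.
move=> LQ qQ qL Hz.
rewrite /Phi.
rewrite (eq_bigr (fun a => (2 * Hvy (Yobs Y z) q + \sum_(i | z i == q) J q i) + J q a
   + (if z a \in QUs then 2 * Hvy (Yobs Y z) (z a) + J (z a) a
                          + \sum_(i | z i == q) J (z a) i else 0))); last first.
  move=> a _; rewrite /Phi /=; set T := (if _ then _ else _); set S := \sum_(i < n | _) J q i; ring.
rewrite big_split /= big_split /= sum_notin_const //.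
congr (_ + _).
rewrite -big_mkcondr /=.
rewrite (eq_bigl (fun a => z a \in QUs :\: L)); last first.
  by move=> a; rewrite !inE andbC.
rewrite (sum_by_val2 z (QUs :\: L) (fun r a => 2 * Hvy (Yobs Y z) r + J r a
                          + \sum_(i | z i == q) J r i)).
apply: eq_bigr => r; rewrite inE => /andP[_ rQ].
have Hr : Nq r = 1%N by apply/eqP; rewrite -QUP.
rewrite big_split /= big_split /= !sum_const_unique //.
Qed.


Lemma step_bound (L : {set 'I_Q}) q : L \subset QUs -> q \in QUs -> q \notin L ->
  \sum_(z in Om) Gs L q (vhat P w Y) z <= 1920 * wbar ^+ 2 * #|Om|%:R * beta.
Proof.
move=> LQ qQ qL.
have w2 : 0 <= wbar ^+ 2 by apply: sqr_ge0.
have b0 := beta_ge0.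
have Om0 : 0 <= (#|Om|%:R : R) by apply: ler0n.
case: (set_0Vmem Om) => [E0|[z0 Hz0]].
  rewrite E0 big_set0.
  by apply: mulr_ge0 => //; apply: mulr_ge0 => //; apply: mulr_ge0.
have Hq : Nq q = 1%N by apply/eqP; rewrite -QUP.
have [c0 Hc0] := exOm Hz0 Hq.
have npos : (0 < n)%N by apply: leq_ltn_trans (leq0n c0) (ltn_ord c0).
set N := (n - #|L|)%N.
have HN0 : #|[set a | z0 a \notin L]| = N := card_notin Hz0 LQ.
have Npos : (0 < N)%N by rewrite -HN0; apply/card_gt0P; exists c0; rewrite inE Hc0.
have HLn : (#|L| <= n)%N.
  by rewrite -(card_in Hz0 LQ); apply: leq_trans (max_card _) _; rewrite card_ord.
have Hrest : (#|QUs :\: L| <= N)%N.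
  have sub : QUs :\: L \subset QUs by apply: subsetDl.
  rewrite -(card_in Hz0 sub) -HN0; apply: subset_leq_card; apply/subsetP => a.
  by rewrite !inE => /andP[].
set nr := (n%:R : R). set Nr := (N%:R : R). set Om' := (#|Om|%:R : R).
have nrp : 0 < nr by rewrite ltr0n.
have Nrp : 0 < Nr by rewrite ltr0n.
have NrE : Nr = nr - #|L|%:R by rewrite /Nr /N natrB.
set X := fun z r => 2 * Hvy (Yobs Y z) r + \sum_(a | z a == r) J r a
                           + \sum_(i | z i == q) J r i.
set S := \sum_(z in Om) ((n - #|L|)%N%:R * (2 * Hvy (Yobs Y z) q + \sum_(i | z i == q) J q i)
   + \sum_(a | z a \notin L) J q a + \sum_(r in QUs :\: L) X z r).
have step1 : \sum_(z in Om) Gs L q (vhat P w Y) z <= 240 * wbar ^+ 2 * Nr^-1 * S.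
  apply: (le_trans (y := \sum_(z in Om) (n - #|L|)%N%:R^-1 *
        \sum_(a | z a \notin L) (240 * wbar ^+ 2 * Phi q z a))).
    by apply: ler_sum => z Hz; exact: Gs_pt.
  rewrite /S mulr_sumr; apply: ler_sum => z Hz.
  rewrite -/N -/Nr -mulr_sumr (Phi_sum LQ qQ qL Hz) -/N -/Nr /X.
  by rewrite mulrCA mulrA le_refl.
have SJq := SJ qQ.
have A1 : nr * \sum_(z in Om) Hvy (Yobs Y z) q <= Om' * (nr * beta).
  by rewrite (Hv_K1 qQ) ler_wpM2l.
have A2 : nr * \sum_(z in Om) \sum_(i | z i == q) J q i <= Om' * (nr * beta).
  have -> : nr * \sum_(z in Om) \sum_(i | z i == q) J q i = Om' * \sum_i J q i by exact: K1.
  by rewrite ler_wpM2l.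
have A3 : nr * \sum_(z in Om) \sum_(a | z a \notin L) J q a <= Om' * Nr * (nr * beta).
  have -> : nr * \sum_(z in Om) \sum_(a | z a \notin L) J q a = Om' * (nr - #|L|%:R) * \sum_i J q i by exact: K2.
  rewrite -NrE; apply: ler_wpM2l => //; exact: mulr_ge0.
have inner : forall r, r \in QUs -> nr * \sum_(z in Om) X z r <= 4 * Om' * (nr * beta).
  move=> r rQ.
  have Hr : Nq r = 1%N by apply/eqP; rewrite -QUP.
  have SJr := SJ rQ.
  have Ex : \sum_(z in Om) X z r = 2 * \sum_(z in Om) Hvy (Yobs Y z) r
      + \sum_(z in Om) \sum_(a | z a == r) J r a + \sum_(z in Om) \sum_(i | z i == q) J r i.
    by rewrite /X big_split /= big_split /= -mulr_sumr.
  have E1 : nr * \sum_(z in Om) Hvy (Yobs Y z) r = Om' * \sum_i J r i := Hv_K1 rQ.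
  have E2 : nr * \sum_(z in Om) \sum_(a | z a == r) J r a = Om' * \sum_i J r i by exact: K1.
  have E3 : nr * \sum_(z in Om) \sum_(i | z i == q) J r i = Om' * \sum_i J r i by exact: K1.
  rewrite Ex !mulrDr mulrCA E1 E2 E3.
  have := ler_wpM2l Om0 SJr; rewrite -/Om' -/nr /beta; lra.
have A4 : nr * \sum_(z in Om) \sum_(r in QUs :\: L) X z r <= Nr * (4 * Om' * (nr * beta)).
  rewrite exchange_big /= mulr_sumr.
  apply: (le_trans (y := \sum_(r in QUs :\: L) (4 * Om' * (nr * beta)))).
    by apply: ler_sum => r; rewrite inE => /andP[_ rQ]; exact: inner.
  rewrite sumr_const -[_ *+ #|_|]mulr_natl ler_wpM2r //.
    by apply: mulr_ge0; [apply: mulr_ge0 => //| apply: mulr_ge0 => //; apply: ltW].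
  by rewrite /Nr ler_nat.
have SE : S = Nr * (2 * \sum_(z in Om) Hvy (Yobs Y z) q + \sum_(z in Om) \sum_(i | z i == q) J q i)
          + \sum_(z in Om) \sum_(a | z a \notin L) J q a + \sum_(z in Om) \sum_(r in QUs :\: L) X z r.
  rewrite /S big_split /= big_split /= -mulr_sumr big_split /= -mulr_sumr.
  by rewrite -/N -/Nr.
have Sb : nr * S <= nr * (8 * Nr * Om' * beta).
  rewrite SE.
  have B1 := ler_wpM2l (ltW Nrp) A1.
  have B2 := ler_wpM2l (ltW Nrp) A2.
  move: A3 A4 B1 B2.
  set A := \sum_(z in Om) Hvy (Yobs Y z) q.
  set B := \sum_(z in Om) \sum_(i | z i == q) J q i.
  set C := \sum_(z in Om) \sum_(a | z a \notin L) J q a.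
  set D := \sum_(z in Om) \sum_(r in QUs :\: L) X z r.
  move=> A3 A4 B1 B2.
  nra.
have S8 : S <= 8 * Nr * Om' * beta by rewrite -(ler_pM2l nrp).
apply: le_trans step1 _.
have k0 : 0 <= 240 * wbar ^+ 2 * Nr^-1.
  by apply: mulr_ge0; [apply: mulr_ge0 | rewrite invr_ge0 ltW].
apply: le_trans (ler_wpM2l k0 S8) _.
have Nr0 : Nr != 0 by rewrite gt_eqF.
have -> : 240 * wbar ^+ 2 * Nr^-1 * (8 * Nr * Om' * beta) = 1920 * wbar ^+ 2 * Om' * beta by field.
by [].
Qed.


Lemma Yobs_agree z z' r : agree (QU Nq) z z' -> r \in QUs -> Yobs Y z r = Yobs Y z' r.
Proof.
move/agreeP=> HA rQ; rewrite /Yobs; apply: eq_bigl => i.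
apply/eqP/eqP => H.
  by rewrite -(HA i) // H rQ.
by rewrite (HA i) // H rQ orbT.
Qed.

Lemma vhat_inv : {in Om &, forall z z', agree (QU Nq) z z' -> vhat P w Y z = vhat P w Y z'}.
Proof.
move=> z z' _ _ HA; rewrite !vhatE /vh; apply: eq_bigr => r rQ.
rewrite (Yobs_agree HA rQ); congr (_ * (_ - _)^+2).
rewrite /gm; congr (_ * _); apply: eq_bigr => t Ht.
by rewrite (Yobs_agree HA (Bk_sub rQ Ht)).
Qed.

Lemma var_bound :
  \sum_(z in Om) (vhat P w Y z - Expect Om (vhat P w Y))^+2 <=
  #|QU Nq|%:R * (1920 * wbar ^+ 2 * #|Om|%:R * beta).
Proof.
apply: ES; first exact: vhat_inv.
by move=> L q LQ qQ qL; apply: step_bound.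
Qed.

End Bound.

Lemma chebyshev (T : finType) (Om : {set T}) (f : T -> R) (m t : R) : 0 < t ->
  #|[set z in Om | t <= `|f z - m|]|%:R * t ^+ 2 <= \sum_(z in Om) (f z - m)^+2.
Proof.
move=> tp.
rewrite (bigID (fun z => t <= `|f z - m|)) /=.
set S2 := \sum_(i in Om | ~~ (t <= `|f i - m|)) (f i - m) ^+ 2.
have h2 : 0 <= S2 by apply: sumr_ge0 => z _; apply: sqr_ge0.
suff h : #|[set z in Om | t <= `|f z - m|]|%:R * t ^+ 2 <=
         \sum_(i in Om | t <= `|f i - m|) (f i - m) ^+ 2.
  by apply: le_trans h _; rewrite lerDl.
rewrite (eq_bigl (fun z => z \in [set z in Om | t <= `|f z - m|])); last by move=> z; rewrite inE.
rewrite mulr_natl -sumr_const; apply: ler_sum => z; rewrite inE => /andP[_ Ht].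
rewrite -[(f z - m)^+2]ger0_norm ?sqr_ge0 // normrX.
have := normr_ge0 (f z - m); nra.
Qed.

Theorem lemmaS14 :
  exists C : R, 0 < C /\
  forall (n Q : nat) (Nq : 'I_Q -> nat) (Y : 'I_n -> 'I_Q -> R)
         (P : {set {set 'I_Q}}) (w : 'I_Q -> R) (wbar Delta zeta : R),
    (forall q, (1 <= Nq q)%N) ->
    (\sum_(q < Q) Nq q)%N = n ->
    partition P (QU Nq) ->
    (forall B, B \in P -> (2 <= #|B|)%N) ->
    (* Condition 3 *)
    (forall q : 'I_Q,
        (n%:R)^-1 * \sum_(i < n) (Y i q - Ybar Y q) ^+ 4 <= Delta ^+ 4) ->
    (* Condition 6 *)
    (forall B, B \in P -> forall q, q \in B ->
        `|Ybar Y q - Ybar_grp Y B| <= zeta) ->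
    (forall q, q \in QU Nq -> `|w q| <= wbar) ->
    forall t : R, 0 < t ->
      Prob (CR_support Nq)
        (fun z => t <= `|vhat P w Y z - Expect (CR_support Nq) (vhat P w Y)|)
      <= C * wbar ^+ 2 * (Delta ^+ 4 + Delta ^+ 2 * zeta ^+ 2)
           * (#|QU Nq|%:R) / t ^+ 2.
Proof.
exists 3840; split; first lra.
move=> n Q Nq Y P w wbar Delta zeta _ _ HP Hsz H3 H6 Hw t tp.
have V := var_bound HP H3 Hsz H6 Hw.
have Ch := chebyshev (CR_support Nq) (vhat P w Y) (Expect (CR_support Nq) (vhat P w Y)) tp.
rewrite /Prob.
set k := #|[set z in CR_support Nq | _]| in Ch *.
set M := #|CR_support Nq| in V *.
set D := Delta ^+ 4 + Delta ^+ 2 * zeta ^+ 2.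
set qu := (#|QU Nq|%:R : R) in V *.
have D0 : 0 <= D.
  rewrite /D; apply: addr_ge0; first exact: exprn_even_ge0.
  by apply: mulr_ge0; apply: sqr_ge0.
have qu0 : 0 <= qu by apply: ler0n.
have w2 : 0 <= wbar ^+ 2 by apply: sqr_ge0.
have t2 : 0 < t ^+ 2 by apply: exprn_gt0.
have R0 : 0 <= 3840 * wbar ^+ 2 * D * qu / t ^+ 2.
  apply: divr_ge0; last exact: ltW.
  by apply: mulr_ge0 => //; apply: mulr_ge0 => //; apply: mulr_ge0.
case: (posnP M) => [M0|Mp].
  have k0 : k = 0%N.
    apply/eqP; rewrite -leqn0 -M0 /k /M; apply: subset_leq_card.
    by apply/subsetP => z; rewrite inE => /andP[].
  by rewrite k0 mul0r.
have Mr : 0 < (M%:R : R) by rewrite ltr0n.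
have hb : beta Delta zeta <= 2 * D.
  rewrite /beta /D; have := sqr_ge0 (Delta * zeta); rewrite exprMn; lra.
have K : (k%:R : R) * t ^+ 2 <= 3840 * wbar ^+ 2 * D * qu * M%:R.
  apply: le_trans Ch _; apply: le_trans V _.
  have c0 : 0 <= qu * (1920 * wbar ^+ 2 * M%:R) by apply: mulr_ge0 => //; apply: mulr_ge0 => //; apply: mulr_ge0.
  have := ler_wpM2l c0 hb.
  have -> : qu * (1920 * wbar ^+ 2 * M%:R * beta Delta zeta) = qu * (1920 * wbar ^+ 2 * M%:R) * beta Delta zeta by ring.
  move=> h; apply: le_trans h _.
  by rewrite le_eqVlt; apply/orP; left; apply/eqP; ring.
have M0 : (M%:R : R) != 0 by rewrite gt_eqF.
have T0 : t ^+ 2 != 0 by rewrite gt_eqF.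
have e1 : (k%:R : R) / M%:R = (k%:R * t ^+ 2) / (M%:R * t ^+ 2).
  by field; rewrite M0 gt_eqF.
have e2 : 3840 * wbar ^+ 2 * D * qu / t ^+ 2 = (3840 * wbar ^+ 2 * D * qu * M%:R) / (M%:R * t ^+ 2).
  by field; rewrite M0 gt_eqF.
rewrite e1 e2 ler_pM2r ?invr_gt0 //; exact: mulr_gt0.
Qed.
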